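(* Let $f\in{\rm elh}(\mathbb{C})$ be non-polynomial and $g\in{\rm elh}(\mathbb{C})$, suppose there is $h_1\in{\rm elh}(\mathbb{C})$ with $h_1\neq g$ and $f\circ h_1=f\circ g$, and let $t(z),h(z),L(w)$ be entire functions with $f(g(z)+we^{t(z)})=f(g(z))+e^{L(w)+h(z)}\sin\pi w$ for all $(z,w)\in\mathbb{C}^2$. Then: (a) $L'(w)\sin\pi w+\pi\cos\pi w$ never vanishes; (b) the function $-h'(z)f(g(z)+we^{t(z)})+(g'(z)+wt'(z)e^{t(z)})f'(g(z)+we^{t(z)})$ is independent of $w$.
   Context: ${\rm elh}(\mathbb{C})$ denotes the set of entire functions with nowhere vanishing derivative and derivative $1$ at $0$. *)

(* Defs.v *)
From Stdlib Require Import Reals List.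
From Coquelicot Require Export Coquelicot.
Open Scope C_scope.

Definition cderiv (f : C -> C) (z l : C) : Prop :=
  @is_derive C_AbsRing C_NormedModule f z l.

Definition has_cderiv (f f' : C -> C) : Prop := forall z, cderiv f z (f' z).

Definition entire (f : C -> C) : Prop := forall z, exists l, cderiv f z l.

Definition elh (f : C -> C) : Prop :=
  exists f' : C -> C, has_cderiv f f' /\ (forall z, f' z <> 0) /\ f' 0 = 1.

Definition cexp (z : C) : C :=
  (exp (Re z) * cos (Im z), exp (Re z) * sin (Im z))%R.
Definition csin (z : C) : C := (cexp (Ci * z) - cexp (- (Ci * z))) / (2 * Ci).
Definition ccos (z : C) : C := (cexp (Ci * z) + cexp (- (Ci * z))) / 2.

Definition cPI : C := RtoC PI.

(* polynomial evaluation with coefficient list [a0; a1; ...] *)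
Definition peval (l : list C) (z : C) : C :=
  fold_right (fun a acc => a + z * acc) 0 l.

Definition is_polynomial (f : C -> C) : Prop :=
  exists l : list C, forall z, f z = peval l z.

(* Main.v *)
Require Import Defs.
From Stdlib Require Import Reals Lra.
From Coquelicot Require Import Coquelicot.
Open Scope C_scope.
Lemma R_bound (phi : R -> R) l : is_derive phi 0%R l -> forall eps, (0 < eps)%R ->
  exists d, (0 < d)%R /\ forall x, (Rabs x < d)%R -> (Rabs (phi x - phi 0 - x * l) <= eps * Rabs x)%R.
Proof.
  intros [_ Hd] eps He. specialize (Hd 0%R (fun P H => H)).
  destruct (Hd (mkposreal eps He)) as [d Hd']. exists d. split. apply cond_pos.
  intros x Hx. specialize (Hd' x). simpl in Hd'.
  unfold norm, minus, plus, opp, scal in Hd'; simpl in Hd'.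
  unfold abs, mult in Hd'; simpl in Hd'.
  replace (phi x - phi 0 - x * l)%R with (phi x + - phi 0 + - (mult (x + - 0) l))%R.
  2:{ unfold mult; simpl. ring. }
  replace (Rabs x) with (Rabs (x + - 0))%R by (f_equal; ring).
  apply Hd'. unfold ball; simpl. unfold AbsRing_ball, abs, minus, plus, opp; simpl.
  replace (x + - 0)%R with x by ring. exact Hx.
Qed.

Open Scope R_scope.
Lemma key_est eps : 0 < eps -> exists d, 0 < d /\ forall a b, Cmod (a,b) < d ->
  Cmod ((exp a * cos b - 1 - a)%R, (exp a * sin b - b)%R) <= eps * Cmod (a, b).
Proof.
  intros He. set (e := eps / 8). assert (he : 0 < e) by (unfold e; lra).
  set (e1 := Rmin e 1). assert (he1 : 0 < e1) by (apply Rmin_pos; lra).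
  assert (e1e : e1 <= e) by apply Rmin_l. assert (e11 : e1 <= 1) by apply Rmin_r.
  destruct (R_bound cos _ (is_derive_cos 0) e1 he1) as [d1 [Hd1 H1]].
  destruct (R_bound exp _ (is_derive_exp 0) e1 he1) as [d2 [Hd2 H2]].
  destruct (R_bound sin _ (is_derive_sin 0) e1 he1) as [d3 [Hd3 H3]].
  set (d := Rmin (Rmin d1 d2) (Rmin d3 (Rmin 1 (e/2)))).
  assert (hd : 0 < d) by (unfold d; repeat apply Rmin_pos; lra).
  assert (dd1 : d <= d1) by (unfold d; eapply Rle_trans; [apply Rmin_l|apply Rmin_l]).
  assert (dd2 : d <= d2) by (unfold d; eapply Rle_trans; [apply Rmin_l|apply Rmin_r]).
  assert (dd3 : d <= d3) by (unfold d; eapply Rle_trans; [apply Rmin_r|apply Rmin_l]).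
  assert (dd4 : d <= 1) by (unfold d; eapply Rle_trans; [apply Rmin_r|];
     eapply Rle_trans; [apply Rmin_r|apply Rmin_l]).
  assert (dd5 : d <= e/2) by (unfold d; eapply Rle_trans; [apply Rmin_r|];
     eapply Rle_trans; [apply Rmin_r|apply Rmin_r]).
  exists d. split; auto. intros a b Hab.
  set (m := Cmod (a,b)) in *.
  pose proof (Rmax_Cmod (a,b)) as HM; simpl in HM. fold m in HM.
  assert (ha : Rabs a <= m) by (eapply Rle_trans; [apply Rmax_l|exact HM]).
  assert (hb : Rabs b <= m) by (eapply Rle_trans; [apply Rmax_r|exact HM]).
  specialize (H1 b ltac:(lra)). specialize (H2 a ltac:(lra)). specialize (H3 b ltac:(lra)).
  rewrite cos_0, sin_0 in H1. rewrite exp_0 in H2. rewrite sin_0, cos_0 in H3.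
  replace (cos b - 1 - b * - 0) with (cos b - 1) in H1 by ring.
  replace (exp a - 1 - a * 1) with (exp a - 1 - a) in H2 by ring.
  replace (sin b - 0 - b * 1) with (sin b - b) in H3 by ring.
  assert (Hea : 0 < exp a) by apply exp_pos.
  assert (Hea3 : exp a <= 3).
  { pose proof (Rle_abs (exp a - 1 - a)). pose proof (Rle_abs a). nra. }
  set (x := exp a * cos b - 1 - a). set (y := exp a * sin b - b).
  assert (Hx : Rabs x <= 4 * e * m).
  { replace x with (exp a * (cos b - 1) + (exp a - 1 - a)) by (unfold x; ring).
    eapply Rle_trans. apply Rabs_triang. rewrite Rabs_mult, (Rabs_right (exp a)) by lra.
    pose proof (Rabs_pos (cos b - 1)). pose proof (Rabs_pos b). pose proof (Rabs_pos a).
    assert (A1 : Rabs (cos b - 1) <= e * m) by nra.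
    assert (A2 : Rabs (exp a - 1 - a) <= e * m) by nra.
    nra. }
  assert (Hy : Rabs y <= 3 * e * m).
  { replace y with ((exp a - 1) * sin b + (sin b - b)) by (unfold y; ring).
    eapply Rle_trans. apply Rabs_triang. rewrite Rabs_mult.
    assert (E1 : Rabs (exp a - 1) <= e).
    { replace (exp a - 1) with ((exp a - 1 - a) + a) by ring.
      eapply Rle_trans. apply Rabs_triang. pose proof (Rabs_pos a).
      assert (e1 * Rabs a <= 1 * Rabs a) by (apply Rmult_le_compat_r; lra). lra. }
    assert (E2 : Rabs (sin b) <= 2 * Rabs b).
    { replace (sin b) with ((sin b - b) + b) by ring.
      eapply Rle_trans. apply Rabs_triang. pose proof (Rabs_pos b).
      assert (e1 * Rabs b <= 1 * Rabs b) by (apply Rmult_le_compat_r; lra). lra. }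
    pose proof (Rabs_pos (exp a - 1)). pose proof (Rabs_pos (sin b)). pose proof (Rabs_pos b).
    assert (A1 : Rabs (exp a - 1) * Rabs (sin b) <= e * (2 * Rabs b)) by (apply Rmult_le_compat; lra).
    assert (A2 : Rabs (sin b - b) <= e * Rabs b) by nra.
    nra. }
  pose proof (Cmod_2Rmax (x,y)) as HC; simpl in HC.
  assert (Hs : sqrt 2 <= 2).
  { pose proof (sqrt_pos 2). pose proof (sqrt_sqrt 2 ltac:(lra)). nra. }
  assert (Hmx : Rmax (Rabs x) (Rabs y) <= 4 * e * m).
  { assert (0 <= e * m) by (apply Rmult_le_pos; [lra| apply Cmod_ge_0]). apply Rmax_lub; lra. }
  pose proof (Rle_trans _ _ _ (Rabs_pos x) Hx).
  eapply Rle_trans. exact HC. unfold e in *.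
  pose proof (sqrt_pos 2). pose proof (Rmax_l (Rabs x) (Rabs y)). pose proof (Rabs_pos x). nra.
Qed.


Open Scope C_scope.

Notation Dv := (@is_derive C_AbsRing C_NormedModule).

Lemma D_plus (f g : C -> C) x a b : Dv f x a -> Dv g x b -> Dv (fun y => f y + g y) x (a + b).
Proof. intros Hf Hg. exact (is_derive_plus f g x a b Hf Hg). Qed.
Lemma D_opp (f : C -> C) x a : Dv f x a -> Dv (fun y => - f y) x (- a).
Proof. intros Hf. exact (is_derive_opp f x a Hf). Qed.
Lemma D_minus (f g : C -> C) x a b : Dv f x a -> Dv g x b -> Dv (fun y => f y - g y) x (a - b).
Proof. intros Hf Hg. exact (is_derive_minus f g x a b Hf Hg). Qed.
Lemma D_mult (f g : C -> C) x a b : Dv f x a -> Dv g x b -> Dv (fun y => f y * g y) x (a * g x + f x * b).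
Proof. intros Hf Hg.
 assert (E: forall h l, Dv h x l -> @is_derive C_AbsRing (AbsRing_NormedModule C_AbsRing) h x l).
 { intros h l [H1 H2]. split. { destruct H1; split; auto. } intros y Hy eps.
   specialize (H2 y Hy eps). exact H2. }
 assert (E': forall h l, @is_derive C_AbsRing (AbsRing_NormedModule C_AbsRing) h x l -> Dv h x l).
 { intros h l [H1 H2]. split. { destruct H1; split; auto. } intros y Hy eps.
   specialize (H2 y Hy eps). exact H2. }
 apply E'. exact (is_derive_mult f g x a b (E _ _ Hf) (E _ _ Hg) Cmult_comm). Qed.
Lemma D_toA h x l : Dv h x l -> @is_derive C_AbsRing (AbsRing_NormedModule C_AbsRing) h x l.
Proof. intros [H1 H2]. split. { destruct H1; split; auto. } intros y Hy eps.
   specialize (H2 y Hy eps). exact H2. Qed.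
Lemma D_ofA h x l : @is_derive C_AbsRing (AbsRing_NormedModule C_AbsRing) h x l -> Dv h x l.
Proof. intros [H1 H2]. split. { destruct H1; split; auto. } intros y Hy eps.
   specialize (H2 y Hy eps). exact H2. Qed.
Lemma D_comp (f g : C -> C) x a b : Dv f (g x) a -> Dv g x b -> Dv (fun y => f (g y)) x (b * a).
Proof. intros Hf Hg. exact (is_derive_comp f g x a b Hf (D_toA _ _ _ Hg)). Qed.
Lemma D_const (c x : C) : Dv (fun _ => c) x (RtoC 0).
Proof. exact (is_derive_const c x). Qed.
Lemma D_id (x : C) : Dv (fun y => y) x (RtoC 1).
Proof. apply D_ofA. exact (is_derive_id x). Qed.
Lemma D_val (f : C -> C) x a b : Dv f x a -> a = b -> Dv f x b.
Proof. intros H ->; exact H. Qed.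
Lemma D_fext (f g : C -> C) x a : Dv f x a -> (forall y, f y = g y) -> Dv g x a.
Proof. intros H E. exact (is_derive_ext f g x a E H). Qed.

Lemma cexp0_deriv : Dv cexp (RtoC 0) (RtoC 1).
Proof.
 split. apply is_linear_scal_l.
 intros x Hx. apply (@is_filter_lim_locally_unique C_AbsRing (AbsRing_NormedModule C_AbsRing)) in Hx. subst x.
 intros eps. apply (@locally_norm_le_locally C_AbsRing (AbsRing_NormedModule C_AbsRing)).
 destruct (key_est eps (cond_pos eps)) as [d [Hd Hk]].
 exists (mkposreal d Hd). intros [a b] Hy. unfold ball_norm in Hy.
 change (Cmod (minus (a,b) (RtoC 0)) < d)%R in Hy.
 unfold norm, minus, plus, opp, scal in *; simpl in *. unfold mult, abs; simpl.
 assert (E1: (a,b) + - 0 = (a,b)) by (apply injective_projections; simpl; ring).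
 rewrite E1.
 assert (E2: cexp (a,b) + - cexp 0 + - ((a,b) * 1) = (exp a * cos b - 1 - a, exp a * sin b - b)%R).
 { unfold cexp; simpl. rewrite exp_0, cos_0, sin_0. apply injective_projections; simpl; ring. }
 rewrite E2. apply Hk. rewrite <- E1. exact Hy.
Qed.

Lemma cexp_add a b : cexp (a + b) = cexp a * cexp b.
Proof.
 destruct a as [a1 a2], b as [b1 b2]. unfold cexp; simpl.
 rewrite exp_plus, cos_plus, sin_plus. apply injective_projections; simpl; ring.
Qed.

Lemma cexp_deriv z : Dv cexp z (cexp z).
Proof.
 assert (Hz : Dv cexp ((fun y => y - z) z) (RtoC 1)).
 { simpl. replace (z - z) with (RtoC 0) by ring. exact cexp0_deriv. }
 pose proof (D_comp _ _ _ _ _ Hz (D_minus _ _ _ _ _ (D_id z) (D_const z z))) as H1.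
 pose proof (D_mult _ _ _ _ _ (D_const (cexp z) z) H1) as H2.
 eapply D_fext. eapply D_val. exact H2. simpl. ring.
 intros y. simpl. rewrite <- cexp_add. f_equal. ring.
Qed.

Lemma D_cexp (u : C -> C) x du : Dv u x du -> Dv (fun y => cexp (u y)) x (du * cexp (u x)).
Proof. intros H. exact (D_comp cexp u x _ _ (cexp_deriv (u x)) H). Qed.

Lemma Ci_nz : Ci <> 0.
Proof. intros H. injection H. lra. Qed.

Lemma csin_deriv u : Dv csin u (ccos u).
Proof.
 pose proof (D_mult _ _ _ _ _ (D_const Ci u) (D_id u)) as H1.
 pose proof (D_cexp _ _ _ H1) as H2.
 pose proof (D_cexp _ _ _ (D_opp _ _ _ H1)) as H3.
 pose proof (D_minus _ _ _ _ _ H2 H3) as H4.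
 pose proof (D_mult _ _ _ _ _ H4 (D_const (/ (2 * Ci)) u)) as H5.
 eapply D_fext. eapply D_val. exact H5.
 - unfold ccos. simpl. field. exact Ci_nz.
 - intros y. unfold csin. reflexivity.
Qed.

Lemma D_csin (u : C -> C) x du : Dv u x du -> Dv (fun y => csin (u y)) x (du * ccos (u x)).
Proof. intros H. exact (D_comp csin u x _ _ (csin_deriv (u x)) H). Qed.

Lemma D_unique (f : C -> C) x a b : Dv f x a -> Dv f x b -> a = b.
Proof. intros Ha Hb. apply is_C_derive_unique in Ha. apply is_C_derive_unique in Hb. congruence. Qed.

Lemma cexp_nz z : cexp z <> 0.
Proof.
 unfold cexp. intros H. injection H. intros H1 H2.
 pose proof (exp_pos (Re z)). pose proof (sin2_cos2 (Im z)).
 apply Rmult_integral in H1. apply Rmult_integral in H2.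
 destruct H1 as [H1|H1]; [lra|]. destruct H2 as [H2|H2]; [lra|].
 unfold Rsqr in *. rewrite H1, H2 in *. lra.
Qed.

Theorem proposition3p30 (f g t h L : C -> C) :
  elh f -> ~ is_polynomial f -> elh g ->
  (exists h1 : C -> C, elh h1 /\ h1 <> g /\ (fun z => f (h1 z)) = (fun z => f (g z))) ->
  entire t -> entire h -> entire L ->
  (forall z w : C,
     f (g z + w * cexp (t z)) = f (g z) + cexp (L w + h z) * csin (cPI * w)) ->
  (forall L' : C -> C, has_cderiv L L' ->
     forall w : C, L' w * csin (cPI * w) + cPI * ccos (cPI * w) <> 0)
  /\
  (forall f' g' h' t' : C -> C,
     has_cderiv f f' -> has_cderiv g g' -> has_cderiv h h' -> has_cderiv t t' ->
     exists c : C -> C, forall z w : C,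
       - h' z * f (g z + w * cexp (t z))
       + (g' z + w * t' z * cexp (t z)) * f' (g z + w * cexp (t z)) = c z).
Proof.
 intros Hf _ _ _ _ _ _ Heq. split.
 - intros L' HL' w Hc. destruct Hf as [f0' [Hf' [Hnz _]]].
   set (z := RtoC 0).
   pose proof (D_plus _ _ _ _ _ (D_const (g z) w) (D_mult _ _ _ _ _ (D_id w) (D_const (cexp (t z)) w))) as I1.
   pose proof (D_comp f (fun w => g z + w * cexp (t z)) w _ _ (Hf' _) I1) as H1.
   pose proof (D_plus _ _ _ _ _ (D_const (f (g z)) w)
      (D_mult _ _ _ _ _ (D_cexp _ _ _ (D_plus _ _ _ _ _ (HL' w) (D_const (h z) w)))
         (D_csin _ _ _ (D_mult _ _ _ _ _ (D_const cPI w) (D_id w))))) as H2.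
   assert (H2' := D_fext _ _ _ _ H2 (fun y => eq_sym (Heq z y))).
   pose proof (D_unique _ _ _ _ H1 H2') as E.
   assert (E2 : cexp (t z) * f0' (g z + w * cexp (t z)) = cexp (L w + h z) * (L' w * csin (cPI * w) + cPI * ccos (cPI * w))).
   { transitivity ((0 + (1 * cexp (t z) + w * 0)) * f0' (g z + w * cexp (t z))). ring.
     simpl in E. rewrite E. ring. }
   rewrite Hc in E2. rewrite Cmult_0_r in E2.
   apply (f_equal Cmod) in E2. rewrite Cmod_mult, Cmod_0 in E2.
   assert (A1 := proj1 (Cmod_gt_0 _) (cexp_nz (t z))).
   assert (A2 := proj1 (Cmod_gt_0 _) (Hnz (g z + w * cexp (t z)))).
   nra.
 - intros f' g' h' t' Hf' Hg' Hh' Ht'.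
   exists (fun z => g' z * f' (g z) - h' z * f (g z)). intros z w.
   pose proof (D_plus _ _ _ _ _ (Hg' z) (D_mult _ _ _ _ _ (D_const w z) (D_cexp _ _ _ (Ht' z)))) as I1.
   pose proof (D_comp f (fun z => g z + w * cexp (t z)) z _ _ (Hf' _) I1) as H1.
   pose proof (D_plus _ _ _ _ _ (D_comp f g z _ _ (Hf' _) (Hg' z))
      (D_mult _ _ _ _ _ (D_cexp _ _ _ (D_plus _ _ _ _ _ (D_const (L w) z) (Hh' z)))
         (D_const (csin (cPI * w)) z))) as H2.
   assert (H2' := D_fext _ _ _ _ H2 (fun y => eq_sym (Heq y w))).
   pose proof (D_unique _ _ _ _ H1 H2') as E. simpl in E.
   assert (Hk : (g' z + w * t' z * cexp (t z)) * f' (g z + w * cexp (t z))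
       = g' z * f' (g z) + h' z * cexp (L w + h z) * csin (cPI * w)).
   { transitivity ((g' z + (0 * cexp (t z) + w * (t' z * cexp (t z)))) * f' (g z + w * cexp (t z))). ring.
     rewrite E. ring. }
   rewrite Heq, Hk. ring.
Qed.
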